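(* For any $\theta=(B,\Omega)$ and $\psi_i=(m_i,s_i)$, the inverse of the Hessian of $J_i$ with respect to $\psi_i$ is $(\nabla_{\psi_i\psi_i}J_i)^{-1}(\theta,\psi_i)=-\begin{pmatrix}D_{\tilde a_i}^{-1/2}&\\&D_{\tilde a_i}^{-1/2}\end{pmatrix}\begin{pmatrix}C_i&-C_iD_{s_i}\Lambda_i\\-\Lambda_iD_{s_i}C_i&\Lambda_i+\Lambda_iD_{s_i}C_iD_{s_i}\Lambda_i\end{pmatrix}\begin{pmatrix}D_{\tilde a_i}^{-1/2}&\\&D_{\tilde a_i}^{-1/2}\end{pmatrix}$, where $\Lambda_i=\big(I_p+D_{s_i}^2(D_{\tilde a_i}+D_{\tilde a_i}D_{s_i}^2+\Omega_D)\big)^{-1}D_{\tilde a_i}D_{s_i}^2$ and $C_i=\big(I_p+D_{\tilde a_i}^{-1/2}\Omega D_{\tilde a_i}^{-1/2}-D_{s_i}\Lambda_iD_{s_i}\big)^{-1}$.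
   Context: PLN model, observation $i$ with counts $Y_i\in\mathbb N^p$, covariate $x_i\in\mathbb R^m$, offset $o_i\in\mathbb R^p$; $B\in\mathcal M_{m,p}(\mathbb R)$ (columns $B_j$), $\Omega$ symmetric positive definite. Variational parameter $\psi_i=(m_i,s_i)\in\mathbb R^p\times(0,\infty)^p$ (ordered as $(m_i,s_i)$ in the Hessian). Single-observation ELBO: $J_i(\theta,\psi_i)=Y_i^\top(o_i+m_i+B^\top x_i)-\tilde a_i^\top1_p-\sum_j\log(Y_{ij}!)+\frac12\log|\Omega|-\frac12m_i^\top\Omega m_i-\frac12\mathrm{diag}(\Omega)^\top s_i^2+\sum_j\log s_{ij}+\frac p2$, $\tilde a_{ij}=\exp(o_{ij}+x_i^\top B_j+m_{ij}+s_{ij}^2/2)$. Notation: $D_v=\mathrm{Diag}(v)$, $\Omega_D=I_p\odot\Omega$ (diagonal part of $\Omega$). *)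

(* Defs.v *)
From HB Require Import structures.
From mathcomp Require Import all_boot all_order all_algebra.
From mathcomp Require Import all_classical all_reals all_analysis.
Set Implicit Arguments. Unset Strict Implicit. Unset Printing Implicit Defensive.
Import Order.TTheory GRing.Theory Num.Theory.
Import numFieldNormedType.Exports.
Local Open Scope ring_scope.

Definition hessian (R : realType) (n : nat) (f : 'rV[R]_n -> R) (x : 'rV[R]_n)
  : 'M[R]_n :=
  \matrix_(k, l) derive (fun y => derive f y (delta_mx 0 l)) x (delta_mx 0 k).

(* tilde a_i as a row vector, given m_i and s_i. The covariate x_i is a row
   vector of size d, so (x *m B) 0 j = x_i^T B_j. *)
Definition atilde (R : realType) (p d : nat) (x : 'rV[R]_d) (o : 'rV[R]_p)
  (B : 'M[R]_(d, p)) (mi si : 'rV[R]_p) : 'rV[R]_p :=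
  \row_j expR (o 0 j + (x *m B) 0 j + mi 0 j + si 0 j ^+ 2 / 2).

(* Single-observation ELBO J_i(theta, psi_i), psi_i = (m_i, s_i) stored as
   row_mx m_i s_i. *)
Definition elbo_i (R : realType) (p d : nat) (Y : 'I_p -> nat) (x : 'rV[R]_d)
  (o : 'rV[R]_p) (B : 'M[R]_(d, p)) (Om : 'M[R]_p) (psi : 'rV[R]_(p + p)) : R :=
  let mi := lsubmx psi in
  let si := rsubmx psi in
  let a := atilde x o B mi si in
  \sum_(j < p) (Y j)%:R * (o 0 j + mi 0 j + (x *m B) 0 j)
  - \sum_(j < p) a 0 j
  - \sum_(j < p) ln ((Y j)`!%:R)
  + ln (\det Om) / 2
  - (mi *m Om *m mi^T) 0 0 / 2
  - \sum_(j < p) Om j j * si 0 j ^+ 2 / 2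
  + \sum_(j < p) ln (si 0 j)
  + p%:R / 2.

Definition sym_pos_def (R : realType) (p : nat) (Om : 'M[R]_p) : Prop :=
  Om^T = Om /\ forall v : 'rV[R]_p, v != 0 -> 0 < (v *m Om *m v^T) 0 0.

(* Main.v *)
Require Import Defs.
From HB Require Import structures.
From mathcomp Require Import all_boot all_order all_algebra.
From mathcomp Require Import all_classical all_reals all_analysis.
From mathcomp Require Import ring lra.
Import Order.TTheory GRing.Theory Num.Theory.
Import numFieldNormedType.Exports.
Local Open Scope ring_scope.
Section Aux.
Context {R : realType}.

Lemma is_derive_dir {V : normedModType R} (f : V -> R) a v df :
  is_derive a v f df <-> is_derive (0:R) 1 (fun t : R => f (t *: v + a)) df.
Proof.
have E : (fun h : R => h^-1 *: ((f \o shift a) (h *: v) - f a)) =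
  (fun h : R => h^-1 *: (((fun t : R => f (t *: v + a)) \o shift 0) (h *: 1) - f (0 *: v + a))).
  by apply: funext => h /=; rewrite addr0 scale0r add0r [h *: 1]mulr1.
split => -[d1 d2]; (split; [move: d1; rewrite /derivable ?E -?E // | move: d2; rewrite /derive ?E -?E //]).
Qed.

Lemma is_derive_chain {V : normedModType R} (f : V -> R) (g : R -> R) a v df dg :
  is_derive a v f df -> is_derive (f a) 1 g dg ->
  is_derive a v (fun y => g (f y)) (dg * df).
Proof.
move=> /is_derive_dir Hf Hg; apply/is_derive_dir.
have Hg' : is_derive ((fun t : R => f (t *: v + a)) 0) 1 g dg.
  by rewrite /= scale0r add0r.
exact: (@is_derive1_comp R g (fun t : R => f (t *: v + a)) 0 dg df Hg' Hf).
Qed.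

Lemma is_deriveD' {V : normedModType R} (f g : V -> R) a v df dg :
  is_derive a v f df -> is_derive a v g dg ->
  is_derive a v (fun y => f y + g y) (df + dg).
Proof. move=> H1 H2; exact: (is_deriveD H1 H2). Qed.

Lemma is_deriveB' {V : normedModType R} (f g : V -> R) a v df dg :
  is_derive a v f df -> is_derive a v g dg ->
  is_derive a v (fun y => f y - g y) (df - dg).
Proof. move=> H1 H2; exact: (is_deriveB H1 H2). Qed.

Lemma is_deriveM' {V : normedModType R} (f g : V -> R) a v df dg :
  is_derive a v f df -> is_derive a v g dg ->
  is_derive a v (fun y => f y * g y) (f a * dg + g a * df).
Proof. move=> H1 H2; exact: (is_deriveM H1 H2). Qed.

Lemma is_derive_sum' {V : normedModType R} n (h : 'I_n -> V -> R) a v dh :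
  (forall i, is_derive a v (h i) (dh i)) ->
  is_derive a v (fun y => \sum_(i < n) h i y) (\sum_(i < n) dh i).
Proof.
move=> H; have := is_derive_sum H.
by rewrite (_ : \sum_(i < n) h i = (fun y => \sum_(i < n) h i y)) // fct_sumE.
Qed.

Lemma is_derive_const {V : normedModType R} (c : R) a (v : V) :
  is_derive a v (fun _ => c) 0.
Proof. exact: is_derive_cst. Qed.

Lemma is_derive_coord n (c : 'I_n) (a v : 'rV[R]_n) :
  is_derive a v (fun y => y 0 c) (v 0 c).
Proof.
apply/is_derive_dir.
rewrite (_ : (fun t => _) = (fun t : R => t * v 0 c + a 0 c)); last first.
  by apply: funext => t; rewrite !mxE.
eapply is_derive_eq.
  apply: is_deriveD'.
by rewrite /= scaler0 add0r addr0 [_%:A]mulr1.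
Qed.

End Aux.
Arguments is_deriveD' {R V f g a v df dg}.
Arguments is_deriveB' {R V f g a v df dg}.
Arguments is_deriveM' {R V f g a v df dg}.


Section Hess.
Variables (R : realType) (p d : nat) (Y : 'I_p -> nat) (x : 'rV[R]_d)
  (o : 'rV[R]_p) (B : 'M[R]_(d, p)) (Om : 'M[R]_p).

Definition Aj (j : 'I_p) (y : 'rV[R]_(p + p)) :=
  expR (o 0 j + (x *m B) 0 j + y 0 (lshift p j) + y 0 (rshift p j) ^+ 2 / 2).
Definition Fq (y : 'rV[R]_(p + p)) :=
  \sum_j (\sum_i y 0 (lshift p i) * Om i j) * y 0 (lshift p j).
Definition F (y : 'rV[R]_(p + p)) :=
  \sum_(j < p) (Y j)%:R * (o 0 j + y 0 (lshift p j) + (x *m B) 0 j)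
  - \sum_(j < p) Aj j y
  - \sum_(j < p) ln ((Y j)`!%:R)
  + ln (\det Om) / 2
  - Fq y / 2
  - \sum_(j < p) Om j j * y 0 (rshift p j) ^+ 2 / 2
  + \sum_(j < p) ln (y 0 (rshift p j))
  + p%:R / 2.

Lemma f_eq : elbo_i Y x o B Om = F.
Proof.
apply: funext => y; rewrite /elbo_i /F /Fq /Aj /atilde.
congr (_ + _ - _ + _ - _ - _ + _ + _).
all: rewrite ?mxE; try congr (- _); try congr (_ / _);
  try (apply: eq_bigr => j _; rewrite !mxE //).
all: try (apply: eq_bigr => i _; rewrite !mxE //).
all: congr (_ * _); apply: eq_bigr => i _; rewrite !mxE //.
Qed.


Lemma two_neq0 : (2 : R) != 0. Proof. by rewrite pnatr_eq0. Qed.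

Lemma d_sq c (a v : 'rV[R]_(p + p)) :
  is_derive a v (fun y : 'rV[R]_(p + p) => y 0 c ^+ 2 / 2) (a 0 c * v 0 c).
Proof.
rewrite (_ : (fun y => _) = (fun y : 'rV[R]_(p + p) => y 0 c * y 0 c * 2^-1)); last first.
  by apply: funext => y; rewrite expr2.
eapply is_derive_eq.
  apply: is_deriveM'.
  apply: is_deriveM'; exact: is_derive_coord.
by rewrite /=; field.
Qed.


Ltac dsolve := repeat (first [ exact: is_derive_coord | exact: d_sq
  | exact: is_derive_const | apply: is_deriveD' | apply: is_deriveB'
  | apply: is_deriveM' ]).

Lemma d_arg j (a v : 'rV[R]_(p + p)) :
  is_derive a v (fun y : 'rV[R]_(p + p) => o 0 j + (x *m B) 0 j + y 0 (lshift p j)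
     + y 0 (rshift p j) ^+ 2 / 2)
   (v 0 (lshift p j) + a 0 (rshift p j) * v 0 (rshift p j)).
Proof. eapply is_derive_eq; first dsolve. by rewrite /=; ring. Qed.

Lemma d_A j (a v : 'rV[R]_(p + p)) :
  is_derive a v (Aj j) (Aj j a * (v 0 (lshift p j) + a 0 (rshift p j) * v 0 (rshift p j))).
Proof.
have H := @is_derive_chain _ _ (fun y : 'rV[R]_(p + p) => o 0 j + (x *m B) 0 j + y 0 (lshift p j)
     + y 0 (rshift p j) ^+ 2 / 2) expR a v _ _ (d_arg j a v) (is_derive_expR _).
apply: is_derive_eq H _; by rewrite mulrC.
Qed.

Lemma d_ln c (a v : 'rV[R]_(p + p)) : 0 < a 0 c ->
  is_derive a v (fun y : 'rV[R]_(p + p) => ln (y 0 c)) (v 0 c / a 0 c).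
Proof.
move=> ha.
have H := @is_derive_chain _ _ (fun y : 'rV[R]_(p + p) => y 0 c) (@ln R) a v _ _
  (@is_derive_coord R _ c a v) (is_derive1_ln ha).
apply: is_derive_eq H _; by rewrite mulrC.
Qed.

Lemma d_inv c (a v : 'rV[R]_(p + p)) : 0 < a 0 c ->
  is_derive a v (fun y : 'rV[R]_(p + p) => (y 0 c)^-1) (- (a 0 c ^+ 2)^-1 * v 0 c).
Proof.
move=> ha.
have Hi := @is_deriveV R id (a 0 c) _ 1 (lt0r_neq0 ha) (is_derive_id _ _).
have H := @is_derive_chain _ _ (fun y : 'rV[R]_(p + p) => y 0 c) GRing.inv a v _ _
  (@is_derive_coord R _ c a v) Hi.
apply: is_derive_eq H _; by rewrite /= [_ *: 1]mulr1.
Qed.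

Definition Gq (a v : 'rV[R]_(p + p)) :=
  \sum_j ((\sum_i v 0 (lshift p i) * Om i j) * a 0 (lshift p j)
         + (\sum_i a 0 (lshift p i) * Om i j) * v 0 (lshift p j)).

Lemma d_Fq (a v : 'rV[R]_(p + p)) : is_derive a v Fq (Gq a v).
Proof.
eapply is_derive_eq.
  apply: is_derive_sum' => j.
  apply: is_deriveM'; last exact: is_derive_coord.
  apply: is_derive_sum' => i.
  apply: is_deriveM'; try exact: is_derive_coord; try exact: is_derive_const.
rewrite /Gq; apply: eq_bigr => j _ /=.
rewrite addrC mulrC; congr (_ * _ + _).
by apply: eq_bigr => i _; rewrite mulr0 add0r mulrC.
Qed.


Definition G (a v : 'rV[R]_(p + p)) :=
  \sum_j (Y j)%:R * v 0 (lshift p j)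
  - \sum_j Aj j a * (v 0 (lshift p j) + a 0 (rshift p j) * v 0 (rshift p j))
  - Gq a v / 2
  - \sum_j Om j j * (a 0 (rshift p j) * v 0 (rshift p j))
  + \sum_j v 0 (rshift p j) / a 0 (rshift p j).

Lemma d_F (a v : 'rV[R]_(p + p)) : (forall j, 0 < a 0 (rshift p j)) ->
  is_derive a v F (G a v).
Proof.
move=> ha.
have h1 : is_derive a v (fun y : 'rV[R]_(p + p) =>
    \sum_(j < p) (Y j)%:R * (o 0 j + y 0 (lshift p j) + (x *m B) 0 j))
    (\sum_j (Y j)%:R * v 0 (lshift p j)).
  apply: is_derive_sum' => j; eapply is_derive_eq; first dsolve.
  by rewrite /=; ring.
have h2 : is_derive a v (fun y : 'rV[R]_(p + p) => \sum_(j < p) Aj j y)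
    (\sum_j Aj j a * (v 0 (lshift p j) + a 0 (rshift p j) * v 0 (rshift p j))).
  by apply: is_derive_sum' => j; exact: d_A.
have h3 := @is_derive_const R _ (\sum_(j < p) ln ((Y j)`!%:R : R)) a v.
have h4 := @is_derive_const R _ (ln (\det Om) / 2) a v.
have h5 : is_derive a v (fun y => Fq y / 2) (Gq a v / 2).
  eapply is_derive_eq.
    apply: is_deriveM'; try exact: d_Fq; try exact: is_derive_const.
  by rewrite /=; ring.
have h6 : is_derive a v (fun y : 'rV[R]_(p + p) =>
    \sum_(j < p) Om j j * y 0 (rshift p j) ^+ 2 / 2)
    (\sum_j Om j j * (a 0 (rshift p j) * v 0 (rshift p j))).
  apply: is_derive_sum' => j.
  rewrite (_ : (fun y => _) = (fun y : 'rV[R]_(p + p) => Om j j * (y 0 (rshift p j) ^+ 2 / 2))); last first.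
    by apply: funext => y; rewrite mulrA.
  eapply is_derive_eq.
    apply: is_deriveM'; try exact: d_sq; try exact: is_derive_const.
  by rewrite /=; ring.
have h7 : is_derive a v (fun y : 'rV[R]_(p + p) => \sum_(j < p) ln (y 0 (rshift p j)))
    (\sum_j v 0 (rshift p j) / a 0 (rshift p j)).
  by apply: is_derive_sum' => j; exact: d_ln.
have h8 := @is_derive_const R _ (p%:R / 2 : R) a v.
have := is_deriveD' (is_deriveD' (is_deriveB' (is_deriveB' (is_deriveD'
   (is_deriveB' (is_deriveB' h1 h2) h3) h4) h5) h6) h7) h8.
move=> H; apply: is_derive_eq H _.
by rewrite /G; ring.
Qed.

Definition H2 (a : 'rV[R]_(p + p)) (vl vr wl wr : 'I_p -> R) :=
  - \sum_j Aj j a * (vr j * wr j + (vl j + a 0 (rshift p j) * vr j)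
                                    * (wl j + a 0 (rshift p j) * wr j))
  - (\sum_j ((\sum_i vl i * Om i j) * wl j + (\sum_i wl i * Om i j) * vl j)) / 2
  - \sum_j Om j j * (wr j * vr j)
  - \sum_j vr j * wr j / a 0 (rshift p j) ^+ 2.

Lemma d_G (a v w : 'rV[R]_(p + p)) : (forall j, 0 < a 0 (rshift p j)) ->
  is_derive a w (fun y => G y v)
    (H2 a (fun j => v 0 (lshift p j)) (fun j => v 0 (rshift p j))
          (fun j => w 0 (lshift p j)) (fun j => w 0 (rshift p j))).
Proof.
move=> ha.
have h1 := @is_derive_const R _ (\sum_j (Y j)%:R * v 0 (lshift p j) : R) a w.
have h2 : is_derive a w (fun y : 'rV[R]_(p + p) =>
    \sum_j Aj j y * (v 0 (lshift p j) + y 0 (rshift p j) * v 0 (rshift p j)))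
   (\sum_j Aj j a * (v 0 (rshift p j) * w 0 (rshift p j)
      + (v 0 (lshift p j) + a 0 (rshift p j) * v 0 (rshift p j))
        * (w 0 (lshift p j) + a 0 (rshift p j) * w 0 (rshift p j)))).
  apply: is_derive_sum' => j.
  eapply is_derive_eq.
    apply: is_deriveM'; first exact: d_A.
    apply: is_deriveD'; try exact: is_derive_const.
    apply: is_deriveM'; try exact: is_derive_coord; try exact: is_derive_const.
  by rewrite /=; ring.
have h3 : is_derive a w (fun y => Gq y v / 2) (Gq w v / 2).
  eapply is_derive_eq.
    apply: is_deriveM'; try exact: is_derive_const.
    rewrite /Gq; apply: is_derive_sum' => j.
    apply: is_deriveD'.
      apply: is_deriveM'; try exact: is_derive_coord; try exact: is_derive_const.
    apply: is_deriveM'; try exact: is_derive_const.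
    apply: is_derive_sum' => i.
    apply: is_deriveM'; try exact: is_derive_coord; try exact: is_derive_const.
  rewrite /= /Gq mulr0 add0r mulrC; congr (_ * _).
  apply: eq_bigr => j _ /=; rewrite !mulr0 !addr0 add0r; congr (_ + _).
  rewrite mulrC; congr (_ * _); apply: eq_bigr => i _.
  by rewrite mulr0 add0r mulrC.
have h4 : is_derive a w (fun y : 'rV[R]_(p + p) =>
    \sum_j Om j j * (y 0 (rshift p j) * v 0 (rshift p j)))
   (\sum_j Om j j * (w 0 (rshift p j) * v 0 (rshift p j))).
  apply: is_derive_sum' => j.
  eapply is_derive_eq.
    apply: is_deriveM'; try exact: is_derive_const.
    apply: is_deriveM'; try exact: is_derive_coord; try exact: is_derive_const.
  by rewrite /=; ring.
have h5 : is_derive a w (fun y : 'rV[R]_(p + p) =>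
    \sum_j v 0 (rshift p j) / y 0 (rshift p j))
   (- \sum_j v 0 (rshift p j) * w 0 (rshift p j) / a 0 (rshift p j) ^+ 2).
  rewrite -sumrN; apply: is_derive_sum' => j.
  eapply is_derive_eq.
    apply: is_deriveM'; try exact: is_derive_const.
    exact: d_inv.
  by rewrite /=; ring.
have := is_deriveD' (is_deriveB' (is_deriveB' (is_deriveB' h1 h2) h3) h4) h5.
move=> H; apply: is_derive_eq H _.
by rewrite /H2 add0r.
Qed.

Definition ev (l : 'I_(p + p)) : 'rV[R]_(p + p) := delta_mx 0 l.

Lemma hess_eq (z : 'rV[R]_(p + p)) : (forall j, 0 < z 0 (rshift p j)) ->
  hessian (elbo_i Y x o B Om) z = \matrix_(k, l)
    H2 z (fun j => ev l 0 (lshift p j)) (fun j => ev l 0 (rshift p j))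
         (fun j => ev k 0 (lshift p j)) (fun j => ev k 0 (rshift p j)).
Proof.
move=> hz; rewrite f_eq; apply/matrixP => k l; rewrite !mxE.
have hn : \forall y \near z, forall j : 'I_p, 0 < (y : 'rV[R]_(p + p)) 0 (rshift p j).
  apply: (@filter_forall _ _ (fun j (y : 'rV[R]_(p + p)) => 0 < y 0 (rshift p j)) (nbhs z) _) => j.
  exact: (cvgr_gt _ (@coord_continuous R 1 (p + p) 0 (rshift p j) z) _ (hz j)).
have -> : 'D_(delta_mx 0 k) (fun y => 'D_(delta_mx 0 l) F y) z =
          'D_(delta_mx 0 k) (fun y => G y (ev l)) z.
  apply: near_eq_derive; apply: filterS hn => y hy.
  by case: (d_F y (ev l) hy).
by case: (d_G z (ev l) (ev k) hz).
Qed.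

Lemma sum1 (F : 'I_p -> R) i : (forall j, j != i -> F j = 0) -> \sum_j F j = F i.
Proof. move=> h; rewrite (bigD1 i) //= big1 ?addr0 // => j /h. Qed.

Lemma evLL i : (fun j => ev (lshift p i) 0 (lshift p j)) = (fun j => (j == i)%:R).
Proof. by apply: funext => j; rewrite /ev mxE eq_lshift. Qed.
Lemma evLR i : (fun j => ev (lshift p i) 0 (rshift p j)) = (fun j => 0).
Proof. by apply: funext => j; rewrite /ev mxE eq_rlshift. Qed.
Lemma evRL i : (fun j => ev (rshift p i) 0 (lshift p j)) = (fun j => 0).
Proof. by apply: funext => j; rewrite /ev mxE eq_lrshift. Qed.
Lemma evRR i : (fun j => ev (rshift p i) 0 (rshift p j)) = (fun j => (j == i)%:R).
Proof. by apply: funext => j; rewrite /ev mxE eq_rshift. Qed.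

Ltac zsimp := rewrite ?(mul0r, mulr0, add0r, addr0, mul1r, mulr1, subr0, sub0r, oppr0).
Ltac simpsum k l := repeat (first [
    rewrite big1; last by move=> ? _; zsimp
  | rewrite (sum1 _ k); last by move=> ? /negbTE ->; zsimp
  | rewrite (sum1 _ l); last by move=> ? /negbTE ->; zsimp
  | rewrite big_split /= ]).

Definition Hm (z : 'rV[R]_(p + p)) : 'M[R]_(p + p) :=
  - block_mx (diag_mx (\row_j Aj j z) + Om)
             (diag_mx (\row_j (Aj j z * z 0 (rshift p j))))
             (diag_mx (\row_j (Aj j z * z 0 (rshift p j))))
             (diag_mx (\row_j (Aj j z + Aj j z * z 0 (rshift p j) ^+ 2 + Om j j
                                 + (z 0 (rshift p j) ^+ 2)^-1))).

Lemma hess_block (z : 'rV[R]_(p + p)) : Om^T = Om -> (forall j, 0 < z 0 (rshift p j)) ->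
  hessian (elbo_i Y x o B Om) z = Hm z.
Proof.
move=> hO hz; rewrite hess_eq //; apply/matrixP => k l; rewrite mxE /Hm.
rewrite -(@fintype.splitK p p k) -(@fintype.splitK p p l).
case: (fintype.split k) => k'; case: (fintype.split l) => l' /=.
all: rewrite mxE ?block_mxEul ?block_mxEur ?block_mxEdl ?block_mxEdr !mxE
       ?evLL ?evLR ?evRL ?evRR /H2; simpsum k' l'; rewrite ?eqxx; zsimp.
have hs : forall i j, Om i j = Om j i by move=> i j; rewrite -{1}hO mxE.
all: rewrite ?(hs l' k'); case: (eqVneq k' l') => [e|ne]; [subst l'; rewrite ?eqxx /= | rewrite ?(negbTE ne) /=].
all: rewrite ?mulr1n ?mulr0n ?mulr1 ?mulr0 ?mul0r ?add0r ?addr0 ?oppr0 ?subr0.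
all: have hzk := lt0r_neq0 (hz k'); field; rewrite ?hzk //.
Qed.

End Hess.

Section Alg.
Variables (R : realType) (p : nat).

Lemma diagM (u v : 'rV[R]_p) :
  diag_mx u *m diag_mx v = diag_mx (\row_j (u 0 j * v 0 j)).
Proof. by apply/matrixP => i j; rewrite mul_diag_mx !mxE mulrnAr. Qed.

Lemma diagD (u v : 'rV[R]_p) :
  diag_mx u + diag_mx v = diag_mx (\row_j (u 0 j + v 0 j)).
Proof. by apply/matrixP => i j; rewrite !mxE mulrnDl. Qed.

Lemma diagB (u v : 'rV[R]_p) :
  diag_mx u - diag_mx v = diag_mx (\row_j (u 0 j - v 0 j)).
Proof. by apply/matrixP => i j; rewrite !mxE mulrnBl. Qed.

Lemma diag1 : (1%:M : 'M[R]_p) = diag_mx (\row_j 1).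
Proof. by rewrite -diag_const_mx; congr diag_mx; apply/rowP => j; rewrite !mxE. Qed.

Lemma diag_eq (u v : 'rV[R]_p) : (forall j, u 0 j = v 0 j) -> diag_mx u = diag_mx v.
Proof. by move=> h; congr diag_mx; apply/rowP => j; rewrite h. Qed.

Lemma invdiag (u : 'rV[R]_p) : (forall j, u 0 j != 0) ->
  invmx (diag_mx u) = diag_mx (\row_j (u 0 j)^-1).
Proof.
move=> h.
have e : diag_mx u *m diag_mx (\row_j (u 0 j)^-1) = 1%:M.
  by rewrite diagM diag1; apply: diag_eq => j; rewrite !mxE mulfV.
have [uu _] := mulmx1_unit e.
by rewrite -[RHS](mulKmx uu) e mulmx1.
Qed.


Lemma pd_diag (Om : 'M[R]_p) : sym_pos_def Om -> forall j, 0 < Om j j.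
Proof.
move=> [_ hpd] j.
have nz : (delta_mx 0 j : 'rV[R]_p) != 0.
  apply/eqP => /matrixP /(_ 0 j); rewrite !mxE !eqxx /= => /eqP; by rewrite oner_eq0.
have := hpd _ nz; rewrite -rowE trmx_delta -colE !mxE.
by [].
Qed.

Lemma quad_pos (Om : 'M[R]_p) (h c : 'rV[R]_p) : sym_pos_def Om ->
  (forall j, 0 < c 0 j) ->
  (diag_mx h *m Om *m diag_mx h + diag_mx c) \in unitmx.
Proof.
move=> [hs hpd] hc.
rewrite unitmxE unitfE; apply/negP => /det0P [v vn0 vS].
have e0 : (v *m (diag_mx h *m Om *m diag_mx h + diag_mx c) *m v^T) 0 0 = 0.
  by rewrite vS mul0mx mxE.
set w := v *m diag_mx h.
have eq1 : (v *m (diag_mx h *m Om *m diag_mx h + diag_mx c) *m v^T) 0 0 =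
   (w *m Om *m w^T) 0 0 + \sum_j (v 0 j * c 0 j) * v 0 j.
  rewrite mulmxDr mulmxDl mxE; congr (_ + _).
    by rewrite /w trmx_mul tr_diag_mx !mulmxA.
  by rewrite mxE; apply: eq_bigr => j _; rewrite mul_mx_diag !mxE.
have q1 : 0 <= (w *m Om *m w^T) 0 0.
  have [->|wn0] := eqVneq w 0; first by rewrite !mul0mx mxE.
  exact/ltW/hpd.
have q2 : forall j, 0 <= (v 0 j * c 0 j) * v 0 j.
  move=> j; rewrite mulrAC -expr2; apply: mulr_ge0; first exact: sqr_ge0.
  exact/ltW/hc.
have s0 : \sum_j (v 0 j * c 0 j) * v 0 j = 0.
  have s2 : 0 <= \sum_j (v 0 j * c 0 j) * v 0 j by apply: sumr_ge0 => j _; exact: q2.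
  move: e0; rewrite eq1 => e0; lra.
have vz : v = 0.
  apply/rowP => j; rewrite mxE.
  have := psumr_eq0P (fun j _ => q2 j) s0.
  move=> H0; have H1 := H0 j; have : v 0 j ^+ 2 * c 0 j == 0 by rewrite expr2 mulrAC H1.
  rewrite mulf_eq0 sqrf_eq0 (gt_eqF (hc j)) orbF.
  by move/eqP.
by move: vn0; rewrite vz eqxx.
Qed.

Lemma alg (Om : 'M[R]_p) (a s : 'rV[R]_p) :
  sym_pos_def Om -> (forall j, 0 < a 0 j) -> (forall j, 0 < s 0 j) ->
  let Da := diag_mx a in
  let Dh := diag_mx (\row_j (Num.sqrt (a 0 j))^-1) in
  let Ds := diag_mx s in
  let OmD := diag_mx (\row_j Om j j) in
  let Lam := invmx (1%:M + Ds *m Ds *m (Da + Da *m Ds *m Ds + OmD))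
             *m Da *m Ds *m Ds in
  let C := invmx (1%:M + Dh *m Om *m Dh - Ds *m Lam *m Ds) in
  invmx (- block_mx (diag_mx a + Om) (diag_mx (\row_j (a 0 j * s 0 j)))
          (diag_mx (\row_j (a 0 j * s 0 j)))
          (diag_mx (\row_j (a 0 j + a 0 j * s 0 j ^+ 2 + Om j j + (s 0 j ^+ 2)^-1)))) =
  - (block_mx Dh 0 0 Dh
     *m block_mx C (- (C *m Ds *m Lam)) (- (Lam *m Ds *m C))
                 (Lam + Lam *m Ds *m C *m Ds *m Lam)
     *m block_mx Dh 0 0 Dh).
Proof.
move=> hO ha hs Da Dh Ds OmD Lam C.
have hw := @pd_diag Om hO.
set q := \row_j (1 + s 0 j * s 0 j * (a 0 j + a 0 j * s 0 j * s 0 j + Om j j)).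
have hq : forall j, 0 < q 0 j.
  move=> j; rewrite mxE; have := ha j; have := hs j; have := hw j.
  move=> h1 h2 h3; apply: ltr_wpDr => //.
  apply: mulr_ge0; first by apply: mulr_ge0; exact: ltW.
  apply: addr_ge0; last exact: ltW.
  apply: addr_ge0; first exact: ltW.
  by apply: mulr_ge0; [apply: mulr_ge0|]; exact: ltW.
have eP : 1%:M + Ds *m Ds *m (Da + Da *m Ds *m Ds + OmD) = diag_mx q.
  rewrite /Ds /Da /OmD diag1 !diagM !diagD !diagM !diagD.
  by apply: diag_eq => j; rewrite !mxE.
set lam := \row_j ((q 0 j)^-1 * a 0 j * s 0 j * s 0 j).
have eL : Lam = diag_mx lam.
  rewrite /Lam eP invdiag; last by move=> j; exact: lt0r_neq0.
  by rewrite /Da /Ds !diagM; apply: diag_eq => j; rewrite !mxE.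
have hlam : forall j, 0 < lam 0 j.
  move=> j; rewrite mxE; apply: mulr_gt0; [apply: mulr_gt0; [apply: mulr_gt0; [rewrite invr_gt0; exact: hq | exact: ha] | exact: hs] | exact: hs].
set Dd := diag_mx (\row_j (lam 0 j)^-1).
have eDd : Dd *m Lam = 1%:M.
  rewrite eL diagM diag1; apply: diag_eq => j; have := lt0r_neq0 (hlam j); rewrite !mxE => hl; by rewrite mulVf.
set A0 := 1%:M + Dh *m Om *m Dh.
have uS : (A0 - Ds *m Lam *m Ds) \in unitmx.
  have -> : A0 - Ds *m Lam *m Ds = Dh *m Om *m Dh
      + diag_mx (\row_j (1 - s 0 j * lam 0 j * s 0 j)).
    rewrite /A0 eL /Ds !diagM diag1 -addrA addrC -addrA; congr (_ + _).
    by rewrite addrC diagB; apply: diag_eq => j; rewrite !mxE.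
  apply: quad_pos => // j; rewrite !mxE.
  have := hq j; rewrite mxE.
  set Q := (1 + s 0 j * s 0 j * _) => hQ.
  have := ha j; have := hs j; have := hw j => h1 h2 h3.
  have -> : 1 - s 0 j * (Q^-1 * a 0 j * s 0 j * s 0 j) * s 0 j =
     (1 + s 0 j * s 0 j * a 0 j + s 0 j * s 0 j * Om j j) / Q.
    rewrite /Q; field; by rewrite -/Q lt0r_neq0.
  apply: divr_gt0 => //.
  apply: addr_gt0; [apply: addr_gt0|]; rewrite ?ltr01 //; apply: mulr_gt0 => //; exact: mulr_gt0.
have SC : (A0 - Ds *m Lam *m Ds) *m C = 1%:M by rewrite /C mulmxV.
have A0C : A0 *m C = 1%:M + Ds *m Lam *m Ds *m C by rewrite -SC mulmxBl subrK.
clearbody C Lam.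
have M0M : block_mx A0 Ds Ds Dd *m block_mx C (- (C *m Ds *m Lam)) (- (Lam *m Ds *m C))
                 (Lam + Lam *m Ds *m C *m Ds *m Lam) = 1%:M.
  rewrite mulmx_block (scalar_mx_block p p 1); congr block_mx.
  - by rewrite mulmxN !mulmxA -mulmxBl.
  - rewrite mulmxN mulmxDr !mulmxA A0C !mulmxDl mul1mx.
    by rewrite addNr.
  - by rewrite mulmxN !mulmxA eDd mul1mx subrr.
  - rewrite mulmxN mulmxDr !mulmxA eDd !mul1mx.
    by rewrite addrCA addNr addr0.
have hsq : forall j, 0 < Num.sqrt (a 0 j) by move=> j; rewrite sqrtr_gt0.
set E := diag_mx (\row_j Num.sqrt (a 0 j)).
have EDh : E *m Dh = 1%:M.
  rewrite /E /Dh diagM diag1; apply: diag_eq => j; rewrite !mxE mulfV //.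
  exact: lt0r_neq0.
have DhE : Dh *m E = 1%:M.
  rewrite /E /Dh diagM diag1; apply: diag_eq => j; rewrite !mxE mulVf //.
  exact: lt0r_neq0.
have EE : E *m E = Da.
  rewrite /E /Da diagM; apply: diag_eq => j; rewrite !mxE -expr2 sqr_sqrtr //.
  exact/ltW.
have eH : block_mx (diag_mx a + Om) (diag_mx (\row_j (a 0 j * s 0 j)))
          (diag_mx (\row_j (a 0 j * s 0 j)))
          (diag_mx (\row_j (a 0 j + a 0 j * s 0 j ^+ 2 + Om j j + (s 0 j ^+ 2)^-1)))
   = block_mx E 0 0 E *m block_mx A0 Ds Ds Dd *m block_mx E 0 0 E.
  rewrite !mulmx_block !mulmx0 !mul0mx !addr0 !add0r; congr block_mx.
  - rewrite /A0 mulmxDr mulmx1 mulmxDl EE !mulmxA EDh mul1mx -mulmxA DhE mulmx1.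
    by [].
  - rewrite /E /Ds !diagM; apply: diag_eq => j; rewrite !mxE.
    by rewrite mulrAC -expr2 sqr_sqrtr // ltW.
  - rewrite /E /Ds !diagM; apply: diag_eq => j; rewrite !mxE.
    by rewrite mulrAC -expr2 sqr_sqrtr // ltW.
  - rewrite /E /Dd !diagM; apply: diag_eq => j; rewrite !mxE.
    rewrite mulrAC -expr2 sqr_sqrtr ?ltW //.
    have := hq j; have := ha j; have := hs j; rewrite mxE => h1 h2 h3.
    field; rewrite ?lt0r_neq0 //.
have EB : block_mx E 0 0 E *m block_mx Dh 0 0 Dh = 1%:M.
  by rewrite mulmx_block !mulmx0 !mul0mx !addr0 !add0r EDh (scalar_mx_block p p 1).
set Hf := - block_mx _ _ _ _.
set RHS := - (_ *m _ *m _).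
have main : Hf *m RHS = 1%:M.
  rewrite /Hf /RHS mulNmx mulmxN opprK eH.
  set EB0 := block_mx E 0 0 E; set DB := block_mx Dh 0 0 Dh.
  set M0 := block_mx A0 Ds Ds Dd; set M := block_mx C _ _ _.
  rewrite -!mulmxA (mulmxA EB0 DB) EB mul1mx (mulmxA M0 M) M0M mul1mx.
  exact: EB.
have [uH _] := mulmx1_unit main.
by rewrite -[RHS](mulKmx uH) main mulmx1.
Qed.

End Alg.

Theorem proposition8 (R : realType) (p d : nat) (Y : 'I_p -> nat)
  (x : 'rV[R]_d) (o : 'rV[R]_p) (B : 'M[R]_(d, p)) (Om : 'M[R]_p)
  (mi si : 'rV[R]_p) :
  sym_pos_def Om ->
  (forall j, 0 < si 0 j) ->
  let a := atilde x o B mi si in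
  let Da := diag_mx a in
  let Dh := diag_mx (\row_j (Num.sqrt (a 0 j))^-1) in
  let Ds := diag_mx si in
  let OmD := diag_mx (\row_j Om j j) in
  let Lam := invmx (1%:M + Ds *m Ds *m (Da + Da *m Ds *m Ds + OmD))
             *m Da *m Ds *m Ds in
  let C := invmx (1%:M + Dh *m Om *m Dh - Ds *m Lam *m Ds) in
  invmx (hessian (elbo_i Y x o B Om) (row_mx mi si)) =
  - (block_mx Dh 0 0 Dh
     *m block_mx C (- (C *m Ds *m Lam)) (- (Lam *m Ds *m C))
                 (Lam + Lam *m Ds *m C *m Ds *m Lam)
     *m block_mx Dh 0 0 Dh).
Proof.
move=> hO hs a Da Dh Ds OmD Lam C.
have hz : forall j, 0 < (row_mx mi si : 'rV[R]_(p + p)) 0 (rshift p j).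
  by move=> j; rewrite row_mxEr.
rewrite (@hess_block R p d Y x o B Om _ (proj1 hO) hz) /Hm.
have eA : forall j, @Aj R p d x o B j (row_mx mi si) = a 0 j.
  by move=> j; rewrite /Aj row_mxEl row_mxEr /a /atilde mxE.
have ha : forall j, 0 < a 0 j by move=> j; rewrite /a /atilde mxE expR_gt0.
have r1 : \row_j @Aj R p d x o B j (row_mx mi si) = a by apply/rowP => j; rewrite mxE eA.
have r2 : \row_j (@Aj R p d x o B j (row_mx mi si) * (row_mx mi si : 'rV[R]_(p + p)) 0 (rshift p j))
   = \row_j (a 0 j * si 0 j).
  by apply/rowP => j; rewrite [LHS]mxE [RHS]mxE row_mxEr eA.
have r3 : \row_j (@Aj R p d x o B j (row_mx mi si) + @Aj R p d x o B j (row_mx mi si) *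
      (row_mx mi si : 'rV[R]_(p + p)) 0 (rshift p j) ^+ 2 + Om j j
      + ((row_mx mi si : 'rV[R]_(p + p)) 0 (rshift p j) ^+ 2)^-1)
   = \row_j (a 0 j + a 0 j * si 0 j ^+ 2 + Om j j + (si 0 j ^+ 2)^-1).
  by apply/rowP => j; rewrite [LHS]mxE [RHS]mxE row_mxEr eA.
rewrite r1 r2 r3.
exact: (@alg R p Om a si hO ha hs).
Qed.
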